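(* Let $X=\mathcal{P}(\omega)$ equipped with the subset relation, let $\Gamma$ be the group of all automorphisms of $\langle X,\subseteq\rangle$ acting by application, and let $I$ be the ideal of finite subsets of $X$. Then $\Gamma\curvearrowright X, I$ is almost simple but not simple.
   Context: For a group $\Gamma$ acting on $X$ and $a\subseteq X$, $\mathrm{pstab}(a)=\{\gamma\in\Gamma:\gamma\cdot x=x\ \forall x\in a\}$. A dynamical ideal $\Gamma\curvearrowright X, I$ (a $\Gamma$-invariant ideal containing all singletons) is simple if for all $a\subseteq b$ in $I$, the only normal subgroup of $\mathrm{pstab}(a)$ containing $\mathrm{pstab}(b)$ is $\mathrm{pstab}(a)$ itself; it is almost simple if every set in $I$ has a superset $a\in I$ such that for every $b\in I$ with $a\subseteq b$, the only normal subgroup of $\mathrm{pstab}(a)$ containing $\mathrm{pstab}(b)$ is $\mathrm{pstab}(a)$. *)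

(* Defs.v *)
From HB Require Import structures.
From mathcomp Require Import all_boot.
From mathcomp Require Import boolp classical_sets cardinality.
Set Implicit Arguments. Unset Strict Implicit. Unset Printing Implicit Defensive.
Local Open Scope classical_set_scope.

Definition pstab (X : Type) (Gamma : set (X -> X)) (a : set X) : set (X -> X) :=
  [set g | Gamma g /\ forall x, a x -> g x = x].

Definition subgroup_of (X : Type) (N K : set (X -> X)) : Prop :=
  [/\ N `<=` K, N id,
      (forall f g, N f -> N g -> N (f \o g)) &
      (forall f, N f -> exists2 h, N h & (h \o f = id /\ f \o h = id))].

Definition normal_subgroup_of (X : Type) (N K : set (X -> X)) : Prop :=
  subgroup_of N K /\
  (forall g gi n, K g -> gi \o g = id -> g \o gi = id -> N n ->
     N (g \o n \o gi)).

Definition only_full_normal_over (X : Type) (Gamma : set (X -> X))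
  (a b : set X) : Prop :=
  forall N, normal_subgroup_of N (pstab Gamma a) ->
    pstab Gamma b `<=` N -> N = pstab Gamma a.

Definition dynamical_ideal (X : Type) (Gamma : set (X -> X))
  (I : set (set X)) : Prop :=
  [/\ (forall a b, I b -> a `<=` b -> I a),
      (forall a b, I a -> I b -> I (a `|` b)),
      (forall x, I [set x]) &
      (forall g a, Gamma g -> I a -> I (g @` a))].

Definition simple_dyn (X : Type) (Gamma : set (X -> X)) (I : set (set X)) :=
  forall a b, I a -> I b -> a `<=` b -> only_full_normal_over Gamma a b.

Definition almost_simple_dyn (X : Type) (Gamma : set (X -> X))
  (I : set (set X)) :=
  forall c, I c -> exists a, [/\ I a, c `<=` a &
    forall b, I b -> a `<=` b -> only_full_normal_over Gamma a b].

Definition Pomega := set nat.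

Definition AutPomega : set (Pomega -> Pomega) :=
  [set f | bijective f /\ forall A B : Pomega, A `<=` B <-> f A `<=` f B].

Definition FinIdeal : set (set Pomega) := [set a | finite_set a].

(* Main.v *)
Require Import Defs.
From mathcomp Require Import all_boot.
From mathcomp Require Import boolp classical_sets cardinality functions.
Set Implicit Arguments. Unset Strict Implicit. Unset Printing Implicit Defensive.
Local Open Scope classical_set_scope.

Definition img (s : nat -> nat) : Pomega -> Pomega := fun A => s @` A.
Definition perm (s si : nat -> nat) := cancel s si /\ cancel si s.

Lemma img_comp f g : img (f \o g) = img f \o img g.
Proof. apply: funext => A; rewrite /img /= image_comp //. Qed.

Lemma img_id : img id = id.
Proof. apply: funext => A; rewrite /img /=; exact: image_id. Qed.

Lemma img_ext f g : f =1 g -> img f = img g.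
Proof. by move=> fg; congr img; apply: funext. Qed.

Lemma img_can s si : cancel s si -> cancel (img s) (img si).
Proof.
move=> K A; rewrite /img image_comp; apply/seteqP; split => x /=.
  by case=> y Ay <-; rewrite /= K.
by move=> Ax; exists x => //=; rewrite K.
Qed.

Lemma img_aut s si : perm s si -> AutPomega (img s).
Proof.
case=> K1 K2; split.
  by exists (img si); apply: img_can.
move=> A B; split.
  by move=> AB y [x Ax <-]; exists x => //; apply: AB.
move=> AB x Ax; have [y By e] : img s B (s x) by apply: AB; exists x.
by rewrite -(can_inj K1 e).
Qed.

Lemma set1N0 (x : nat) : [set x] <> set0.
Proof. by move=> e; have : [set x] x by []; rewrite e. Qed.

Lemma set1_inj (a b : nat) : [set a] = [set b] -> a = b.
Proof. by move=> e; have : [set a] a by []; rewrite e. Qed.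

Lemma aut_inv g gi : AutPomega g -> cancel g gi -> cancel gi g -> AutPomega gi.
Proof.
move=> [_ hg] K1 K2; split; first by exists g.
move=> A B; rewrite (hg (gi A) (gi B)) !K2 //.
Qed.

Lemma aut_sing g : AutPomega g -> forall x, exists y, g [set x] = [set y].
Proof.
move=> Ag; have [[gi K1 K2] hg] := Ag.
have g0 : g set0 = set0.
  rewrite -subset0 -{2}(K2 set0); apply/(hg set0 (gi set0)) => ? [].
have hgi := aut_inv Ag K1 K2.
have gi0 : gi set0 = set0.
  rewrite -subset0 -{2}(K1 set0); apply/(proj2 hgi set0 (g set0)) => ? [].
move=> x.
have [y gy] : exists y, g [set x] y.
  case: (pselect (exists w, g [set x] w)) => // ne; exfalso; case: (@set1N0 x).
  rewrite -(K1 [set x]) -gi0; congr gi; apply/seteqP; split=> z //= gz.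
  by exfalso; apply: ne; exists z.
have sub : gi [set y] `<=` [set x].
  by apply/hg; rewrite K2 => z ->.
have [z gz] : exists z, gi [set y] z.
  case: (pselect (exists w, gi [set y] w)) => // ne; exfalso; case: (@set1N0 y).
  rewrite -(K2 [set y]) -g0; congr g; apply/seteqP; split=> w //= gw.
  by exfalso; apply: ne; exists w.
have e : gi [set y] = [set x].
  apply/seteqP; split => // w ->; by rewrite -(sub z gz).
by exists y; rewrite -e K2.
Qed.

Lemma aut_img g : AutPomega g -> exists s si, [/\ perm s si, g = img s &
  forall gi, cancel g gi -> cancel gi g -> gi = img si].
Proof.
move=> Ag; have [[gi K1 K2] hg] := Ag.
have Agi := aut_inv Ag K1 K2.
have [s Hs] := choice (aut_sing Ag).
have [si Hsi] := choice (aut_sing Agi).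
have P1 : cancel s si.
  move=> x; apply: set1_inj; rewrite -Hsi -Hs K1 //.
have P2 : cancel si s.
  move=> x; apply: set1_inj; rewrite -Hs -Hsi K2 //.
have gE : g = img s.
  apply: funext => A; apply/seteqP; split => y.
    move=> gAy; exists (si y); last exact: P2.
    have : [set si y] `<=` A.
      apply/hg; rewrite Hs P2 => z ->; exact: gAy.
    by apply.
  case=> x Ax <-; have : g [set x] `<=` g A by apply/(hg [set x] A) => z ->.
  by rewrite Hs; apply.
exists s, si; split => //.
move=> gi' K1' K2'; apply: funext => A.
by rewrite -[gi' A](img_can P1) -gE K2'.
Qed.

Lemma pstab_perm fam s si : perm s si ->
  (pstab AutPomega fam (img s) <-> forall S, fam S -> forall x, S x <-> S (s x)).
Proof.
move=> [K1 K2]; split.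
  move=> [_ H] S fS x; have e := H S fS; split.
    by move=> Sx; rewrite -e; exists x.
  move=> Sx; have : img s S (s x) by rewrite e.
  by case=> y Sy /(can_inj K1) <-.
move=> H; split; first exact: (img_aut (conj K1 K2)).
move=> S fS; apply/seteqP; split => y.
  by case=> x Sx <-; rewrite -H.
move=> Sy; exists (si y); last exact: K2.
by rewrite (H S fS) K2.
Qed.

Lemma aut_id : AutPomega id.
Proof. split; [by exists id | by []]. Qed.

Lemma aut_comp f g : AutPomega f -> AutPomega g -> AutPomega (f \o g).
Proof.
move=> [bf hf] [bg hg]; split; first exact: bij_comp.
move=> A B; rewrite (hg A B) (hf (g A) (g B)) //.
Qed.

Lemma pstab_sub fam1 fam2 : fam1 `<=` fam2 ->
  subgroup_of (pstab AutPomega fam2) (pstab AutPomega fam1).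
Proof.
move=> sub; split.
- by move=> f [Af H]; split => // S /sub; apply: H.
- by split; [exact: aut_id | by []].
- move=> f g [Af Hf] [Ag Hg]; split; first exact: aut_comp.
  by move=> S fS /=; rewrite Hg ?Hf.
- move=> f [Af Hf]; have [[h K1 K2] _] := Af.
  exists h; last by split; apply: funext => x /=; rewrite ?K1 ?K2.
  split; first exact: aut_inv Af K1 K2.
  by move=> S fS; rewrite -{1}(Hf S fS) K1.
Qed.

Lemma fun_cancel (f g : Pomega -> Pomega) : g \o f = id -> cancel f g.
Proof. by move=> e x; have := congr1 (fun h => h x) e. Qed.

Definition a0 : set (set nat) := [set [set 0%N; 1%N]].
Definition b0 : set (set nat) := [set [set 0%N; 1%N]; [set 0%N]].

Definition swap01 (n : nat) : nat := if n == 0%N then 1%N else if n == 1%N then 0%N else n.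

Lemma swap01K : cancel swap01 swap01.
Proof. by case=> [|[|n]]. Qed.

Lemma not_simple : ~ simple_dyn AutPomega FinIdeal.
Proof.
move=> H.
have Ia0 : FinIdeal a0 by apply: finite_set1.
have Ib0 : FinIdeal b0 by apply: finite_set2.
have sab : a0 `<=` b0 by move=> S ->; left.
have Nn : normal_subgroup_of (pstab AutPomega b0) (pstab AutPomega a0).
  split; first exact: pstab_sub.
  move=> g gi n Kg e1 e2 Nn.
  have [s [si [[P1 P2] gE giE]]] := aut_img (proj1 Kg).
  have gi' := giE gi (fun_cancel e1) (fun_cancel e2).
  have [v [vi [[V1 V2] nE _]]] := aut_img (proj1 Nn).
  rewrite gE gi' nE -!img_comp.
  have Pg := (pstab_perm a0 (conj P1 P2)).1; rewrite -gE in Pg.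
  have {}Pg := Pg Kg _ (erefl _).
  have Pn := (pstab_perm b0 (conj V1 V2)).1; rewrite -nE in Pn.
  have {}Pn := Pn Nn.
  have v0 : v 0%N = 0%N.
    by have := (Pn [set 0%N] (or_intror erefl) 0%N).1 erefl.
  have v1 : v 1%N = 1%N.
    have := (Pn [set 0%N; 1%N] (or_introl erefl) 1%N).1 (or_intror erefl).
    case=> // e; have := (Pn [set 0%N] (or_intror erefl) 1%N).2 e; done.
  have pv : forall x, (x = 0%N \/ x = 1%N) <-> (v x = 0%N \/ v x = 1%N).
    by move=> x; apply: (Pn [set 0%N; 1%N] (or_introl erefl)).
  apply/(pstab_perm b0 (s:=s \o (v \o si)) (si:= s \o (vi \o si))).
    by split => x /=; rewrite ?P1 ?V1 ?P2 ?V2 ?P1 ?P2.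
  have key : forall x, (x = 0%N \/ x = 1%N) -> s (v (si x)) = x.
    move=> x hx; have hs : si x = 0%N \/ si x = 1%N.
      by apply/Pg; rewrite P2.
    have -> : v (si x) = si x by case: hs => ->.
    exact: P2.
  have key2 : forall x, ~ (x = 0%N \/ x = 1%N) -> ~ (s (v (si x)) = 0%N \/ s (v (si x)) = 1%N).
    by move=> x hx /(Pg _).2 /(pv _).2 /(Pg _).1; rewrite P2.
  move=> S [] -> x /=.
  - have [hx|hx] := pselect (x = 0%N \/ x = 1%N); first by rewrite key.
    by split => // h; exfalso; apply: (key2 x hx).
  - have [hx|hx] := pselect (x = 0%N \/ x = 1%N); first by rewrite key.
    split=> h; exfalso; [apply: hx; left | apply: (key2 x hx); left] => //.
have := H a0 b0 Ia0 Ib0 sab _ Nn (fun _ h => h).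
move=> e.
have Ps : pstab AutPomega a0 (img swap01).
  apply/(pstab_perm a0 (conj swap01K swap01K)) => S -> x /=.
  by case: x => [|[|n]] /=; split; move=> [] //; auto.
rewrite -e in Ps.
have := (((pstab_perm b0 (conj swap01K swap01K)).1 Ps) [set 0%N] (or_intror erefl) 0%N).1 erefl.
done.
Qed.

Lemma dyn_ideal : dynamical_ideal AutPomega FinIdeal.
Proof.
split.
- by move=> a b Ib ab; apply: sub_finite_set Ib.
- by move=> a b Ia Ib; rewrite /FinIdeal/= finite_setU.
- by move=> x; apply: finite_set1.
- by move=> g a _ Ia; apply: finite_image.
Qed.
Local Open Scope card_scope.

Definition bijon (X Y : set nat) (f g : nat -> nat) :=
  (forall x, X x -> Y (f x) /\ g (f x) = x) /\
  (forall y, Y y -> X (g y) /\ f (g y) = y).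

Lemma inj_inf (h : nat -> nat) : injective h -> infinite_set (range h).
Proof.
move=> hi; have e : range h #= [set: nat] by apply: inj_card_eq => x y _ _; apply: hi.
by rewrite (eq_finite_set e); exact: infinite_nat.
Qed.

Lemma inf_bij (X Y : set nat) : infinite_set X -> infinite_set Y -> exists f g, bijon X Y f g.
Proof.
move=> hX hY.
have eX := eq_card_nat (countableP X) hX.
have eY := eq_card_nat (countableP Y) hY.
have /card_set_bijP [f [fS fI fU]] : X #= Y by apply: card_eq_trans eX (card_esym eY).
have H0 : forall y, exists x, Y y -> X x /\ f x = y.
  move=> y; have [Yy|nY] := pselect (Y y); last by exists 0%N.
  by have [x Xx e] := fU y Yy; exists x.
have [g H] := choice H0.
exists f, g; split.
  move=> x Xx; have Yf := fS x Xx; split => //.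
  have [Xg e] := H _ Yf; exact: fI (mem_set Xg) (mem_set Xx) e.
by move=> y Yy; apply: H.
Qed.

Lemma split_inf (X : set nat) : infinite_set X ->
  exists X1, [/\ X1 `<=` X, infinite_set X1 & infinite_set (X `\` X1)].
Proof.
move=> hX; have hN : ~ finite_set [set: nat] := infinite_nat.
have [f [g [H1 H2]]] := @inf_bij [set: nat] X hN hX.
have fI : injective f by move=> x y e; rewrite -(H1 x I).2 e (H1 y I).2.
exists (range (fun n => f n.*2)); split.
- by move=> _ [n _ <-]; apply: (H1 _ I).1.
- by apply: inj_inf => m n /fI /double_inj.
- apply: (@sub_infinite_set _ (range (fun n => f n.*2.+1))).
    move=> _ [n _ <-]; split; first by apply: (H1 _ I).1.
    move=> [m _ /fI e]; have := congr1 odd e; rewrite /= !odd_double //.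
  by apply: inj_inf => m n /fI [] /double_inj.
Qed.

Definition eqc (fam : set (set nat)) x y := forall S, fam S -> (S x <-> S y).
Definition cls fam x := [set y | eqc fam x y].

Lemma eqc_refl fam x : eqc fam x x. Proof. by []. Qed.
Lemma eqc_sym fam x y : eqc fam x y -> eqc fam y x.
Proof. by move=> h S fS; split => /(h S fS). Qed.
Lemma eqc_trans fam x y z : eqc fam x y -> eqc fam y z -> eqc fam x z.
Proof. by move=> h1 h2 S fS; exact: iff_trans (h1 S fS) (h2 S fS). Qed.

Lemma cls_eq fam x y : eqc fam x y -> cls fam x = cls fam y.
Proof.
move=> h; apply/seteqP; split => z /=.
  by apply: eqc_trans; apply: eqc_sym.
exact: eqc_trans.
Qed.

Lemma key_exists fam : finite_set fam ->
  exists (K : finType) (k : nat -> K), forall x y, k x = k y -> eqc fam x y.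
Proof.
move=> [n /card_set_bijP [f [fF fI fU]]].
exists {ffun 'I_n -> bool}.
exists (fun x => [ffun i : 'I_n => `[< exists S, [/\ fam S, f S = val i & S x] >] ]).
move=> x y e S famS.
have lt : (f S < n)%N by apply: fF.
have := congr1 (fun F : {ffun 'I_n -> bool} => F (Ordinal lt)) e; rewrite !ffunE /= => e'.
split => Sx.
  have : `[< exists S0, [/\ fam S0, f S0 = f S & S0 y] >].
    by rewrite -e'; apply/asboolP; exists S.
  move=> /asboolP [S0 [f0 eS Sy]].
  by have <- : S0 = S by apply: fI => //; apply: mem_set.
have : `[< exists S0, [/\ fam S0, f S0 = f S & S0 x] >].
  by rewrite e'; apply/asboolP; exists S.
move=> /asboolP [S0 [f0 eS Sy]].
by have <- : S0 = S by apply: fI => //; apply: mem_set.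
Qed.

Lemma fiber_fin fam (X : set nat) : finite_set fam ->
  (forall y, X y -> finite_set (X `&` cls fam y)) -> finite_set X.
Proof.
move=> /key_exists [K [k kH]] H.
apply: (@sub_finite_set _ _ (\bigcup_(v in k @` X) [set z | X z /\ k z = v])).
  by move=> x Xx; exists (k x) => //; exists x.
apply: bigcup_finite; first exact: finite_finset.
move=> _ [y Xy <-]; apply: sub_finite_set (H y Xy).
by move=> z [Xz e]; split => //; apply: kH.
Qed.

Lemma seq_sparse (A : set nat) (p : nat -> nat) :
  infinite_set [set x | A x /\ (x < p x)%N] ->
  exists d : nat -> nat, [/\ injective d, forall n, A (d n) &
     forall i j, p (d i) <> d j].
Proof.
move=> hP.
have nxt : forall k, exists m, (A m /\ (m < p m)%N) /\ (k < m)%N.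
  move=> k; apply: contrapT => nk; apply: hP.
  apply: (@sub_finite_set _ _ `I_k.+1); last exact: finite_II.
  move=> m Pm /=; rewrite ltnS; case: (leqP m k) => // km.
  by exfalso; apply: nk; exists m.
have [nx Hnx] := choice nxt.
pose d n := iter n (nx \o p) (nx 0%N).
have Pd : forall n, A (d n) /\ (d n < p (d n))%N.
  by case=> [|n]; [exact: (Hnx _).1 | exact: (Hnx _).1].
have step : forall n, (p (d n) < d n.+1)%N by move=> n; exact: (Hnx _).2.
have mono : forall i j, (i < j)%N -> (p (d i) < d j)%N.
  move=> i j; elim: j => // j IH; rewrite ltnS leq_eqVlt => /orP[/eqP ->|ij].
    exact: step.
  apply: ltn_trans (IH ij) _; apply: ltn_trans (Pd j).2 _; exact: step.
have mono2 : forall i j, (i < j)%N -> (d i < d j)%N.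
  by move=> i j ij; apply: ltn_trans (Pd i).2 (mono i j ij).
exists d; split.
- move=> i j e; case: (ltngtP i j) => // ij.
    by have := mono2 _ _ ij; rewrite e ltnn.
  by have := mono2 _ _ ij; rewrite e ltnn.
- by move=> n; exact: (Pd n).1.
- move=> i j e; case: (ltnP i j) => ij.
    by have := mono _ _ ij; rewrite e ltnn.
  have : (d j <= d i)%N.
    by move: ij; rewrite leq_eqVlt => /orP[/eqP ->//|/mono2/ltnW].
  by rewrite -e leqNgt (Pd i).2.
Qed.

Lemma L_bij (A E B : set nat) :
  infinite_set (A `&` E) -> infinite_set (A `\` E) -> B `<=` A -> infinite_set B ->
  exists r ri, bijon A A r ri /\ forall x, A x -> ~ E x -> B (r x).
Proof.
move=> hAE hAnE BA hB.
have [B1 [B1B hB1 hBB1]] := split_inf hB.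
have [f1 [g1 [F1 G1]]] := inf_bij hAnE hB1.
have hAB1 : infinite_set (A `\` B1).
  apply: sub_infinite_set hBB1 => z [Bz nB1]; split => //; exact: BA.
have [f2 [g2 [F2 G2]]] := inf_bij hAE hAB1.
exists (fun x => if `[< E x >] then f2 x else f1 x).
exists (fun y => if `[< B1 y >] then g1 y else g2 y).
split; [split|].
- move=> x Ax; case: (pselect (E x)) => Ex.
    rewrite (asboolT Ex); have [[Af nB] e] := F2 x (conj Ax Ex).
    by rewrite (asboolF nB) e.
  rewrite (asboolF Ex); have [B1f e] := F1 x (conj Ax Ex).
  by rewrite (asboolT B1f) e; split => //; apply/BA/B1B.
- move=> y Ay; case: (pselect (B1 y)) => By.
    rewrite (asboolT By); have [[Ag nE] e] := G1 y By.
    by rewrite (asboolF nE) e.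
  rewrite (asboolF By); have [[Ag Eg] e] := G2 y (conj Ay By).
  by rewrite (asboolT Eg) e.
- move=> x Ax nE; rewrite (asboolF nE); apply/B1B.
  exact: (F1 x (conj Ax nE)).1.
Qed.

Definition decomp_spec (A : set nat) (s : nat -> nat) (t : nat -> nat) (E1 E2 : set nat) :=
  [/\ forall x, A x -> A (t x) /\ t (t x) = x,
      forall x, A x -> E1 x -> t x = x,
      forall x, A x -> E2 x -> t (s x) = x,
      infinite_set (A `&` E1) /\ infinite_set (A `\` E1) &
      infinite_set (A `&` E2) /\ infinite_set (A `\` E2)].

Lemma from_seq (A : set nat) s si (d : nat -> nat) : perm s si ->
  (forall x, A x -> A (s x)) -> injective d -> (forall n, A (d n)) ->
  (forall i j, s (d i) <> d j) ->
  exists t E1 E2, decomp_spec A s t E1 E2.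
Proof.
move=> [K1 K2] As dI Ad sd.
pose D := range (fun n => d n.*2).
pose SD := s @` D.
pose O := range (fun n => d n.*2.+1).
have hD : infinite_set D by apply: inj_inf => m n /dI /double_inj.
have hO : infinite_set O by apply: inj_inf => m n /dI [] /double_inj.
have DA : D `<=` A by move=> _ [n _ <-].
have nDSD : forall x, D x -> ~ D (s x).
  by move=> _ [n _ <-] [m _ e]; apply: (sd n.*2 m.*2).
have OnD : forall x, O x -> ~ D x.
  move=> _ [n _ <-] [m _ /dI e]; have := congr1 odd e; rewrite /= !odd_double //.
have OnSD : forall x, O x -> ~ SD x.
  by move=> _ [n _ <-] [_ [m _ <-] e]; apply: (sd m.*2 n.*2.+1).
exists (fun x => if `[< D x >] then s x else if `[< SD x >] then si x else x).
exists [set x | ~ D x /\ ~ SD x], D.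
split.
- move=> x Ax; case: (pselect (D x)) => Dx.
    rewrite (asboolT Dx) (asboolF (nDSD x Dx)).
    have SDs : SD (s x) by exists x.
    by rewrite (asboolT SDs) K1; split => //; apply: As.
  rewrite (asboolF Dx); case: (pselect (SD x)) => SDx.
    rewrite (asboolT SDx); case: SDx => y Dy <-; rewrite K1 (asboolT Dy).
    by split => //; apply: DA.
  by rewrite (asboolF SDx) (asboolF Dx) (asboolF SDx).
- by move=> x Ax [nD nSD]; rewrite (asboolF nD) (asboolF nSD).
- move=> x Ax Dx; rewrite (asboolF (nDSD x Dx)).
  have SDs : SD (s x) by exists x.
  by rewrite (asboolT SDs) K1.
- split.
    apply: sub_infinite_set hO => x Ox; split; last by split; [apply: OnD|apply: OnSD].
    by case: Ox => n _ <-.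
  apply: sub_infinite_set hD => x Dx; split; [exact: DA | by case].
- split.
    by apply: sub_infinite_set hD => x Dx; split => //; apply: DA.
  apply: sub_infinite_set hO => x Ox; split; last exact: OnD.
  by case: Ox => n _ <-.
Qed.

Lemma class_decomp (A : set nat) s si : perm s si -> infinite_set A ->
  (forall x, A x -> A (s x)) -> (forall x, A x -> A (si x)) ->
  exists t E1 E2, decomp_spec A s t E1 E2.
Proof.
move=> [K1 K2] hA As Asi.
have [hF|hF] := pselect (infinite_set (A `&` [set x | s x = x])).
  have [E1 [E1A hE1 hAE1]] := split_inf hA.
  have [E2 [E2F hE2 hFE2]] := split_inf hF.
  exists id, E1, E2; split => //.
  - by move=> x Ax /E2F [] _ ->.
  - split => //; apply: sub_infinite_set hE1 => x E1x; split => //; exact: E1A.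
  - split.
      by apply: sub_infinite_set hE2 => x E2x; split => //; case: (E2F x E2x).
    by apply: sub_infinite_set hFE2 => x [[Ax _] nE]; split.
have [hP|hP] := pselect (infinite_set [set x | A x /\ (x < s x)%N]).
  have [d [dI Ad sd]] := seq_sparse hP.
  exact: (from_seq (conj K1 K2) As dI Ad sd).
have [hQ|hQ] := pselect (infinite_set [set x | A x /\ (x < si x)%N]).
  have [d [dI Ad sd]] := seq_sparse hQ.
  apply: (from_seq (conj K1 K2) As dI Ad) => i j e.
  by apply: (sd j i); rewrite -e K1.
exfalso; apply: hA.
apply: (@sub_finite_set _ _ ((A `&` [set x | s x = x]) `|`
   ([set x | A x /\ (x < s x)%N] `|` si @` [set x | A x /\ (x < si x)%N]))).
  move=> x Ax; case: (ltngtP x (s x)) => h.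
  - by right; left.
  - right; right; exists (s x); last exact: K1.
    by split; [apply: As | rewrite K1].
  - by left.
rewrite !finite_setU; split; first by apply: contrapT.
split; first by apply: contrapT.
by apply: finite_image; apply: contrapT.
Qed.

Lemma glue (fam : set (set nat)) (h1 h2 : set nat -> nat -> nat) :
  (forall x, bijon (cls fam x) (cls fam x) (h1 (cls fam x)) (h2 (cls fam x))) ->
  perm (fun x => h1 (cls fam x) x) (fun x => h2 (cls fam x) x) /\
  forall x, eqc fam x (h1 (cls fam x) x) /\ eqc fam x (h2 (cls fam x) x).
Proof.
move=> H.
have R1 : forall x, eqc fam x (h1 (cls fam x) x).
  by move=> x; exact: ((H x).1 x (@eqc_refl _ _)).1.
have R2 : forall x, eqc fam x (h2 (cls fam x) x).
  by move=> x; exact: ((H x).2 x (@eqc_refl _ _)).1.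
split; last by move=> x; split.
split => x /=.
  by rewrite -(cls_eq (R1 x)); exact: ((H x).1 x (@eqc_refl _ _)).2.
by rewrite -(cls_eq (R2 x)); exact: ((H x).2 x (@eqc_refl _ _)).2.
Qed.

Definition Fset c := [set x | finite_set (cls c x)].
Definition aset c := c `|` [set [set y] | y in Fset c].

Lemma pstab_a c s si : perm s si ->
  (pstab AutPomega (aset c) (img s) <->
   (forall x, eqc c x (s x)) /\ (forall x, Fset c x -> s x = x)).
Proof.
move=> P; have [K1 K2] := P; split.
  move=> /(pstab_perm _ P) H; split.
    by move=> x S cS; exact: H S (or_introl cS) x.
  move=> x Fx.
  by have := (H [set x] (or_intror (ex_intro2 _ _ x Fx erefl)) x).1 erefl.
move=> [H1 H2]; apply/(pstab_perm _ P) => S [cS | [y Fy <-]] x.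
  exact: H1 x S cS.
split => /=; first by move=> ->; exact: H2.
by move=> e; apply: (can_inj K1); rewrite e H2.
Qed.

Lemma pstab_b fam s si : perm s si -> (forall x, eqc fam x (s x)) ->
  pstab AutPomega fam (img s).
Proof. by move=> P H; apply/(pstab_perm _ P) => S fS x; exact: H x S fS. Qed.

Lemma claim1 c b N t ti E :
  finite_set b -> normal_subgroup_of N (pstab AutPomega (aset c)) ->
  pstab AutPomega b `<=` N -> perm t ti ->
  (forall x, eqc c x (t x)) -> (forall x, Fset c x -> t x = x) ->
  (forall x, E x -> t x = x) ->
  (forall x, ~ Fset c x ->
     infinite_set (cls c x `&` E) /\ infinite_set (cls c x `\` E)) ->
  N (img t).
Proof.
move=> fb [[NK _ _ _] Nn] bN [T1 T2] tc tF tE hinf.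
have data : forall A : set nat, exists p : (nat -> nat) * (nat -> nat),
   forall x, cls c x = A ->
   bijon A A p.1 p.2 /\ (Fset c x -> forall z, p.1 z = z /\ p.2 z = z) /\
   (~ Fset c x -> forall z w, A z -> A w -> ~ E z -> ~ E w ->
      eqc b (p.1 z) (p.1 w)).
  move=> A.
  have [[x0 [e0 nF0]]|nex] := pselect (exists x, cls c x = A /\ ~ Fset c x).
  - have [hAE hAnE] := hinf x0 nF0; rewrite e0 in hAE hAnE.
    have hA : infinite_set A by rewrite -e0.
    have [y [Ay hy]] : exists y, A y /\ infinite_set (A `&` cls b y).
      apply: contrapT => ne; apply: hA; apply: (fiber_fin fb) => y Ay.
      by apply: contrapT => hy; apply: ne; exists y.
    have [r [ri [bij hB]]] := L_bij hAE hAnE (@subIsetl _ A (cls b y)) hy.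
    exists (r, ri) => x ex; split => //; split.
      by move=> Fx; exfalso; apply: nF0; rewrite /Fset/= e0 -ex.
    move=> _ z w Az Aw nEz nEw.
    have [_ h1] := hB z Az nEz; have [_ h2] := hB w Aw nEw.
    exact: eqc_trans (eqc_sym h1) h2.
  - exists (id, id) => x ex; split; first by split => z.
    split; first by [].
    by move=> nF; exfalso; apply: nex; exists x.
have [h hH] := choice data.
pose h1 A := (h A).1; pose h2 A := (h A).2.
have [[R1 R2] Rc] := @glue c h1 h2 (fun x => (hH _ x erefl).1).
set r := fun x => h1 (cls c x) x in R1 R2 Rc.
set ri := fun x => h2 (cls c x) x in R1 R2 Rc.
have rF : forall x, Fset c x -> r x = x /\ ri x = x.
  by move=> x Fx; exact: ((hH _ x erefl).2.1 Fx x).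
have homog : forall x z w, ~ Fset c x -> cls c x z -> cls c x w -> ~ E z -> ~ E w ->
    eqc b (r z) (r w).
  move=> x z w nF xz xw nEz nEw.
  rewrite /r -(cls_eq xz) -(cls_eq xw).
  exact: ((hH _ x erefl).2.2 nF z w xz xw nEz nEw).
pose p := r \o (t \o ri).
have Pp : perm p (r \o (ti \o ri)).
  by split => x; rewrite /p /= ?R1 ?T1 ?R2 ?T2 ?R1 ?R2.
have Hb : forall y, eqc b y (p y).
  move=> y; rewrite /p /= -{1}(R2 y); set x := ri y.
  have [Fx|nFx] := pselect (Fset c x); first by rewrite tF //; apply: (@eqc_refl _ _).
  have [Ex|nEx] := pselect (E x); first by rewrite tE //; apply: (@eqc_refl _ _).
  apply: (homog x x (t x) nFx (@eqc_refl c x : cls c x x) (tc x : cls c x (t x)) nEx).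
  move=> Etx; apply: nEx; have e := tE _ Etx.
  by have <- : t x = x by apply: (can_inj T1).
have Np : N (img p) by apply: bN; apply: pstab_b Pp Hb.
have gA : pstab AutPomega (aset c) (img ri).
  apply/(pstab_a c (conj R2 R1)); split; first by move=> x; exact: (Rc x).2.
  by move=> x Fx; exact: (rF x Fx).2.
have := Nn (img ri) (img r) (img p) gA _ _ Np.
rewrite -!img_comp.
have e1 : img (r \o ri) = id by rewrite (img_ext (g:=id)) ?img_id // => x /=; rewrite R2.
have e2 : img (ri \o r) = id by rewrite (img_ext (g:=id)) ?img_id // => x /=; rewrite R1.
move=> /(_ e1 e2); congr N; apply: img_ext => x /=; by rewrite /p /= !R1.
Qed.

Lemma pstab_in_N c b N : finite_set b ->
  normal_subgroup_of N (pstab AutPomega (aset c)) ->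
  pstab AutPomega b `<=` N -> pstab AutPomega (aset c) `<=` N.
Proof.
move=> fb nN bN g Kg.
have [[NK _ Ncomp _] _] := nN.
have [s [si [P gE _]]] := aut_img (proj1 Kg).
have [K1 K2] := P.
have [sc sF] : (forall x, eqc c x (s x)) /\ (forall x, Fset c x -> s x = x).
  by apply/(pstab_a c P); rewrite -gE.
have sic : forall x, eqc c x (si x).
  by move=> x; apply: eqc_sym; have := sc (si x); rewrite K2.
have data : forall A : set nat, exists q : (nat -> nat) * set nat * set nat,
   forall x, cls c x = A ->
   (Fset c x -> forall z, q.1.1 z = z) /\
   (~ Fset c x -> decomp_spec A s q.1.1 q.1.2 q.2).
  move=> A.
  have [[x0 [e0 nF0]]|nex] := pselect (exists x, cls c x = A /\ ~ Fset c x).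
  - have hA : infinite_set A by rewrite -e0.
    have As : forall z, A z -> A (s z).
      by rewrite -e0 => z /= h; apply: eqc_trans h (sc z).
    have Asi : forall z, A z -> A (si z).
      by rewrite -e0 => z /= h; apply: eqc_trans h (sic z).
    have [t [E1 [E2 hd]]] := class_decomp P hA As Asi.
    exists (t, E1, E2) => x ex; split => // Fx.
    by exfalso; apply: nF0; rewrite /Fset/= e0 -ex.
  - exists (id, set0, set0) => x ex; split => // nF.
    by exfalso; apply: nex; exists x.
have [q qH] := choice data.
pose tt A := (q A).1.1.
have bij : forall x, bijon (cls c x) (cls c x) (tt (cls c x)) (tt (cls c x)).
  move=> x; have [Fx|nFx] := pselect (Fset c x).
    by rewrite /tt; have h := (qH _ x erefl).1 Fx; split => z; rewrite h.
  have [h _ _ _ _] := (qH _ x erefl).2 nFx.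
  by split; exact: h.
have [[T1 _] Tc] := @glue c tt tt bij.
set t := fun x => tt (cls c x) x in T1 Tc.
have tF : forall x, Fset c x -> t x = x.
  by move=> x Fx; exact: ((qH _ x erefl).1 Fx x).
pose E1 x := (q (cls c x)).1.2 x.
pose E2 x := (q (cls c x)).2 x.
have clsE : forall x z, cls c x z -> cls c z = cls c x.
  by move=> x z xz; rewrite (cls_eq xz).
have N1 : N (img t).
  apply: (claim1 (E := E1) fb nN bN (conj T1 T1)).
  - by move=> x; exact: (Tc x).1.
  - exact: tF.
  - move=> y E1y; have [Fy|nFy] := pselect (Fset c y); first exact: tF.
    have [_ h _ _ _] := (qH _ y erefl).2 nFy.
    exact: (h y (@eqc_refl _ _) E1y).
  - move=> x nF; have [_ _ _ [h1 h2] _] := (qH _ x erefl).2 nF.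
    split.
      by apply: sub_infinite_set h1 => z [xz Ez]; split => //; rewrite /E1 (clsE x z xz).
    apply: sub_infinite_set h2 => z [xz Ez]; split => //.
    by rewrite /E1 (clsE x z xz).
have N2 : N (img (t \o s)).
  apply: (claim1 (ti := si \o t) (E := E2) fb nN bN).
  - by split => x /=; rewrite ?K1 ?T1 ?K2.
  - by move=> x; apply: eqc_trans (sc x) (Tc (s x)).1.
  - by move=> x Fx /=; rewrite sF // tF.
  - move=> y E2y /=; have [Fy|nFy] := pselect (Fset c y).
      by rewrite sF // tF.
    have [_ _ h _ _] := (qH _ y erefl).2 nFy.
    rewrite /t (clsE y (s y) (sc y)).
    exact: (h y (@eqc_refl _ _) E2y).
  - move=> x nF; have [_ _ _ _ [h1 h2]] := (qH _ x erefl).2 nF.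
    split.
      by apply: sub_infinite_set h1 => z [xz Ez]; split => //; rewrite /E2 (clsE x z xz).
    apply: sub_infinite_set h2 => z [xz Ez]; split => //.
    by rewrite /E2 (clsE x z xz).
have := Ncomp _ _ N1 N2; rewrite -img_comp gE.
by congr N; apply: img_ext => x /=; rewrite T1.
Qed.

Lemma almost_simple : almost_simple_dyn AutPomega FinIdeal.
Proof.
move=> c fc; exists (aset c); split.
- rewrite /FinIdeal /aset /= finite_setU; split => //.
  apply: finite_image; apply: (fiber_fin fc) => y Fy.
  by apply: sub_finite_set Fy => z [].
- by move=> S cS; left.
- move=> b fb ab N nN bN; apply/seteqP; split.
    by have [[NK _ _ _] _] := nN.
  exact: pstab_in_N fb nN bN.
Qed.

Theorem mainTheorem17 :
  dynamical_ideal AutPomega FinIdeal /\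
  almost_simple_dyn AutPomega FinIdeal /\
  ~ simple_dyn AutPomega FinIdeal.
Proof.
split; first exact: dyn_ideal.
split; first exact: almost_simple.
exact: not_simple.
Qed.
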